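(* Let $K\subseteq\mathbb{R}^d$ be a topologically regular compact set. Assume that for every $x\in\partial K$ there are $C_x>0$ and a neighbourhood $V_x$ of $x$ such that every $y\in V_x\cap K$ can be joined to $x$ by a rectifiable path in $\mathring K\cup\{x,y\}$ of length at most $C_x|x-y|$. Then $C^1_{\mathrm{int}}(K)=C^1(K)$; i.e., for every $f\in C^1_{\mathrm{int}}(K)$, the continuous extension of $f$ to $K$ belongs to $C^1(K)$ with the continuous extension of its derivative as a continuous derivative on $K$ (and conversely every $f\in C^1(K)$ restricts to an element of $C^1_{\mathrm{int}}(K)$).
   Context: $K$ is topologically regular if it is the closure of its interior $\mathring K$. $C^1_{\mathrm{int}}(K)$ is the set of $f\in C^1(\mathring K)$ such that $f$ and its derivative $df$ extend continuously to $K$. $C^1(K)$ is the set of $f:K\to\mathbb{R}$ admitting a continuous $df:K\to\mathbb{R}^d$ with $\lim_{y\to x,\,y\in K\setminus\{x\}}\frac{f(y)-f(x)-\langle df(x),y-x\rangle}{|y-x|}=0$ for all $x\in K$. A rectifiable path is a continuous map $\gamma:[a,b]\to\mathbb{R}^d$ of finite length $\sup\sum_j|\gamma(t_j)-\gamma(t_{j-1})|$. *)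

(* Defs.v *)
From mathcomp Require Import ssreflect ssrbool ssrfun eqtype ssrnat seq choice fintype.
From Stdlib Require Import Reals.
Open Scope R_scope.

Definition Vec (d : nat) := 'I_d -> R.

Definition dot {d : nat} (u v : Vec d) : R :=
  List.fold_right Rplus 0 (List.map (fun i => u i * v i) (enum 'I_d)).
Definition vsub {d : nat} (u v : Vec d) : Vec d := fun i => u i - v i.
Definition vnorm {d : nat} (u : Vec d) : R := sqrt (dot u u).
Definition vdist {d : nat} (x y : Vec d) : R := vnorm (vsub x y).

Definition interiorV {d : nat} (A : Vec d -> Prop) (x : Vec d) : Prop :=
  exists r, 0 < r /\ forall y, vdist y x < r -> A y.
Definition closureV {d : nat} (A : Vec d -> Prop) (x : Vec d) : Prop :=
  forall r, 0 < r -> exists y, A y /\ vdist y x < r.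
Definition boundaryV {d : nat} (A : Vec d -> Prop) (x : Vec d) : Prop :=
  closureV A x /\ closureV (fun y => ~ A y) x.

Definition is_closed {d : nat} (A : Vec d -> Prop) : Prop :=
  forall x, closureV A x -> A x.
Definition is_bounded {d : nat} (A : Vec d -> Prop) : Prop :=
  exists M, forall x, A x -> vnorm x <= M.
(* compact subsets of R^d (Heine-Borel) *)
Definition is_compact {d : nat} (A : Vec d -> Prop) : Prop :=
  is_closed A /\ is_bounded A.

Definition topologically_regular {d : nat} (K : Vec d -> Prop) : Prop :=
  forall x, K x <-> closureV (interiorV K) x.

Definition cont_on_R {d : nat} (A : Vec d -> Prop) (f : Vec d -> R) : Prop :=
  forall x, A x -> forall eps, 0 < eps -> exists delta, 0 < delta /\
    forall y, A y -> vdist y x < delta -> Rabs (f y - f x) < eps.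
Definition cont_on_V {d : nat} (A : Vec d -> Prop) (g : Vec d -> Vec d) : Prop :=
  forall x, A x -> forall eps, 0 < eps -> exists delta, 0 < delta /\
    forall y, A y -> vdist y x < delta -> vdist (g y) (g x) < eps.

Definition deriv_on {d : nat} (A : Vec d -> Prop) (f : Vec d -> R) (df : Vec d -> Vec d) : Prop :=
  forall x, A x -> forall eps, 0 < eps -> exists delta, 0 < delta /\
    forall y, A y -> y <> x -> vdist y x < delta ->
      Rabs ((f y - f x - dot (df x) (vsub y x)) / vdist y x) < eps.

Definition C1_on {d : nat} (A : Vec d -> Prop) (f : Vec d -> R) (df : Vec d -> Vec d) : Prop :=
  cont_on_V A df /\ deriv_on A f df.

Definition C1_int_with {d : nat} (K : Vec d -> Prop) (f : Vec d -> R) (df : Vec d -> Vec d)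
  (F : Vec d -> R) (G : Vec d -> Vec d) : Prop :=
  C1_on (interiorV K) f df /\
  (forall x, interiorV K x -> F x = f x /\ G x = df x) /\
  cont_on_R K F /\ cont_on_V K G.

Fixpoint poly_sum {d : nat} (g : R -> Vec d) (t : nat -> R) (n : nat) : R :=
  match n with
  | O => 0
  | S m => poly_sum g t m + vdist (g (t (S m))) (g (t m))
  end.

Definition rect_path_len_le {d : nat} (g : R -> Vec d) (a b L : R) : Prop :=
  a <= b /\
  (forall s, a <= s <= b -> forall eps, 0 < eps -> exists delta, 0 < delta /\
     forall u, a <= u <= b -> Rabs (u - s) < delta -> vdist (g u) (g s) < eps) /\
  (forall (n : nat) (t : nat -> R), t O = a -> t n = b ->
     (forall j, (j < n)%nat -> t j <= t (S j)) -> poly_sum g t n <= L).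

(* Main.v *)
Require Import Defs.
From mathcomp Require Import ssreflect ssrbool ssrfun eqtype ssrnat seq choice fintype.
From Stdlib Require Import Reals Lra Psatz Classical FunctionalExtensionality.
Open Scope R_scope.



Definition sl {I : Type} (l : list I) (f : I -> R) : R := List.fold_right Rplus 0 (List.map f l).

Lemma sl_lin3 {I : Type} (l : list I) (a b c : R) f g h :
  sl l (fun i => a * f i + b * g i + c * h i) = a * sl l f + b * sl l g + c * sl l h.
Proof. induction l as [|i l IH]; rewrite /sl /=; [ring|]. rewrite /sl in IH. rewrite IH. ring. Qed.

Lemma sl_ext {I : Type} (l : list I) f g : (forall i, f i = g i) -> sl l f = sl l g.
Proof. move=> H. induction l as [|i l IH]; rewrite /sl /=; [done|]. rewrite /sl in IH. by rewrite IH H. Qed.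

Lemma sl_nonneg {I : Type} (l : list I) f : (forall i, 0 <= f i) -> 0 <= sl l f.
Proof. move=> H. induction l as [|i l IH]; rewrite /sl /=; [lra|]. rewrite /sl in IH. have := H i. lra. Qed.

Lemma sl_zero {I : Type} (l : list I) f : (forall i, 0 <= f i) -> sl l f = 0 -> forall i, List.In i l -> f i = 0.
Proof. move=> H. induction l as [|j l IH]; rewrite /sl /=; [done|]. rewrite /sl in IH.
move=> Hs i [<-|Hi].
- have := sl_nonneg l f H. rewrite /sl. have := H j. lra.
- apply: IH => //. have := sl_nonneg l f H. rewrite /sl. have := H j. lra.
Qed.

Lemma dot_sl {d} (u v : Vec d) : dot u v = sl (enum 'I_d) (fun i => u i * v i).
Proof. by []. Qed.

Lemma dot_sym {d} (u v : Vec d) : dot u v = dot v u.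
Proof. rewrite !dot_sl. apply: sl_ext => i. ring. Qed.

Lemma sl_sub {I} (l : list I) f g : sl l (fun i => f i - g i) = sl l f - sl l g.
Proof. elim: l => [|i l IH]; rewrite /sl /=; [ring|]. rewrite /sl in IH. rewrite IH. ring. Qed.

Lemma dot_sub_r {d} (u w z : Vec d) : dot u (vsub w z) = dot u w - dot u z.
Proof. rewrite !dot_sl -sl_sub. apply: sl_ext => i. rewrite /vsub. ring. Qed.

Lemma dot_sub_l {d} (u w z : Vec d) : dot (vsub w z) u = dot w u - dot z u.
Proof. by rewrite dot_sym dot_sub_r (dot_sym u w) (dot_sym u z). Qed.

Lemma dot_self_nonneg {d} (u : Vec d) : 0 <= dot u u.
Proof. rewrite dot_sl. apply: sl_nonneg => i. nra. Qed.

Lemma vnorm_nonneg {d} (u : Vec d) : 0 <= vnorm u.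
Proof. apply: sqrt_pos. Qed.

Lemma quad_lemma A B C : 0 <= C -> (forall l, 0 <= A - 2 * l * B + l * l * C) -> B * B <= A * C.
Proof. move=> HC H.
case: (Rle_lt_or_eq_dec 0 C HC) => HC'.
- have := H (B / C). move=> H1.
  have E : A - 2 * (B / C) * B + B / C * (B / C) * C = (A * C - B * B) / C by field; lra.
  rewrite E in H1. have : 0 <= A * C - B * B.
   have -> : A * C - B * B = ((A * C - B * B) / C) * C by field; lra.
   nra. lra.
- subst C. case: (Req_dec B 0) => HB. subst; nra.
  have := H ((A + 1) / (2 * B)).
  have -> : A - 2 * ((A + 1) / (2 * B)) * B + (A + 1) / (2 * B) * ((A + 1) / (2 * B)) * 0 = -1 by field.
  lra.
Qed.

Lemma CS {d} (u v : Vec d) : Rabs (dot u v) <= vnorm u * vnorm v.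
Proof.
have Hq : dot u v * dot u v <= dot u u * dot v v.
  apply: quad_lemma; first exact: dot_self_nonneg.
  move=> l. have := dot_self_nonneg (fun i => u i - l * v i).
  rewrite !dot_sl.
  have -> : sl (enum 'I_d) (fun i => (u i - l * v i) * (u i - l * v i)) =
    sl (enum 'I_d) (fun i => 1 * (u i * u i) + (- 2 * l) * (u i * v i) + (l * l) * (v i * v i)).
    apply: sl_ext => i. ring.
  rewrite sl_lin3. lra.
rewrite /vnorm -sqrt_mult; try exact: dot_self_nonneg.
rewrite -sqrt_Rsqr_abs. apply: sqrt_le_1_alt. rewrite /Rsqr. lra.
Qed.

Lemma vdist_sym {d} (x y : Vec d) : vdist x y = vdist y x.
Proof. rewrite /vdist /vnorm !dot_sl. f_equal. apply: sl_ext => i. rewrite /vsub. ring. Qed.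

Lemma vdist_refl {d} (x : Vec d) : vdist x x = 0.
Proof. rewrite /vdist /vnorm.
have -> : dot (vsub x x) (vsub x x) = 0.
  rewrite dot_sl. rewrite (sl_ext _ _ (fun i => 0 * 0 + 0 * 0 + 0 * 0)); last first.
   move=> i; rewrite /vsub; ring.
  rewrite sl_lin3. ring.
exact: sqrt_0. Qed.

Lemma vdist_nonneg {d} (x y : Vec d) : 0 <= vdist x y.
Proof. exact: vnorm_nonneg. Qed.

Lemma vdist_eq0 {d} (x y : Vec d) : vdist x y = 0 -> x = y.
Proof. rewrite /vdist /vnorm => H.
have H0 : dot (vsub x y) (vsub x y) = 0.
  have := dot_self_nonneg (vsub x y). move=> Hn.
  case: (Rle_lt_or_eq_dec _ _ Hn) => // Hp. have := sqrt_lt_R0 _ Hp. lra.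
apply: functional_extensionality => i.
rewrite dot_sl in H0.
have := sl_zero _ _ (fun i => Rle_0_sqr (vsub x y i)) H0 i.
have Hi : List.In i (enum 'I_d).
  have : i \in enum 'I_d by rewrite mem_enum.
  elim: (enum 'I_d) => [|j l IH] //=. rewrite in_cons => /orP [/eqP ->|Hj]; [by left|right; exact: IH].
move=> /(_ Hi). rewrite /vsub /Rsqr => Hz. nra.
Qed.

Lemma vdist_pos {d} (x y : Vec d) : x <> y -> 0 < vdist x y.
Proof. move=> H. case: (Rle_lt_or_eq_dec _ _ (vdist_nonneg x y)) => // /esym /vdist_eq0. done. Qed.

Lemma vnorm_sq {d} (u : Vec d) : vnorm u * vnorm u = dot u u.
Proof. rewrite /vnorm. apply: sqrt_sqrt. exact: dot_self_nonneg. Qed.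

Lemma vdist_triangle {d} (z y x : Vec d) : vdist z x <= vdist z y + vdist y x.
Proof.
set p := vsub z y. set q := vsub y x.
have E : dot (vsub z x) (vsub z x) = 1 * dot p p + 2 * dot p q + 1 * dot q q.
  rewrite !dot_sl -sl_lin3. apply: sl_ext => i. rewrite /p /q /vsub. ring.
have Hc := CS p q. have Hp := vnorm_sq p. have Hq := vnorm_sq q.
have Hpn := vnorm_nonneg p. have Hqn := vnorm_nonneg q.
have Ha := Rle_abs (dot p q).
rewrite /vdist. rewrite -/p -/q.
rewrite {1}/vnorm E.
rewrite -(sqrt_Rsqr (vnorm p + vnorm q)); last lra.
apply: sqrt_le_1_alt. rewrite /Rsqr. nra.
Qed.



Definition ext (t : nat -> R) (n : nat) (v : R) : nat -> R :=
  fun j => if (j <= n)%nat then t j else v.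

Definition part (a tau : R) (t : nat -> R) (n : nat) : Prop :=
  t O = a /\ t n = tau /\ (forall j, (j < n)%nat -> t j <= t (S j)).

Lemma poly_sum_ext {d} (g : R -> Vec d) t t' n :
  (forall j, (j <= n)%nat -> t j = t' j) -> poly_sum g t n = poly_sum g t' n.
Proof. elim: n => [|n IH] H //=. rewrite IH; last by move=> j Hj; apply: H; apply: leqW.
by rewrite (H n.+1) // (H n) // leqnSn. Qed.

Lemma poly_sum_nonneg {d} (g : R -> Vec d) t n : 0 <= poly_sum g t n.
Proof. elim: n => [|n IH] /=; first lra. have := vdist_nonneg (g (t n.+1)) (g (t n)). lra. Qed.

Lemma poly_sum_snoc {d} (g : R -> Vec d) t n v :
  poly_sum g (ext t n v) n.+1 = poly_sum g t n + vdist (g v) (g (t n)).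
Proof. rewrite /=. rewrite (poly_sum_ext g (ext t n v) t n); last first.
  by move=> j Hj; rewrite /ext Hj.
by rewrite /ext ltnn leqnn. Qed.

Lemma part_snoc a tau t n u : part a tau t n -> tau <= u -> part a u (ext t n u) n.+1.
Proof. move=> [H0 [Hn Hm]] Hu. split; [by rewrite /ext leq0n|split].
- by rewrite /ext ltnn.
- move=> j Hj. rewrite /ext. case: (ltngtP j n) => Hjn.
  + exact: Hm.
  + lra.
  + subst j. rewrite Hn. done.
Qed.

Definition triv (a u : R) : nat -> R := fun j => if j is O then a else u.

Lemma part_triv a u : a <= u -> part a u (triv a u) 1.
Proof. move=> H. split; [done|split; [done|]]. move=> j. case: j => //= _. Qed.

Lemma part_bound {d} (g : R -> Vec d) a b L t n tau :
  rect_path_len_le g a b L -> part a tau t n -> tau <= b -> poly_sum g t n <= L.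
Proof. move=> [_ [_ HL]] Hp Hb.
have Hp' := part_snoc _ _ _ _ _ Hp Hb.
case: Hp' => [H0 [Hn Hm]].
have := HL n.+1 (ext t n b) H0 Hn Hm. rewrite poly_sum_snoc.
have := vdist_nonneg (g b) (g (t n)). lra. Qed.

Lemma L_nonneg {d} (g : R -> Vec d) a b L : rect_path_len_le g a b L -> 0 <= L.
Proof. move=> Hr. have Hab : a <= b by case: Hr.
have := part_bound g a b L _ _ _ Hr (part_triv a b Hab) (Rle_refl b).
have := poly_sum_nonneg g (triv a b) 1. lra. Qed.

Lemma point_bound {d} (g : R -> Vec d) a b L s :
  rect_path_len_le g a b L -> a <= s <= b -> vdist (g s) (g a) <= L.
Proof. move=> Hr Hs.
have := part_bound g a b L _ _ _ Hr (part_triv a s (proj1 Hs)) (proj2 Hs).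
rewrite /=. lra. Qed.

Lemma creep (c e : R) (Q : R -> Prop) : c <= e -> Q c ->
  (forall s, c <= s <= e -> exists delta, 0 < delta /\
     forall t', c <= t' -> s - delta < t' <= s -> Q t' ->
       forall u, s <= u <= e -> u < s + delta -> Q u) -> Q e.
Proof.
move=> Hce Qc Hst.
set A := fun t => c <= t <= e /\ Q t.
have Hb : bound A by exists e => t [[_ H] _].
have Hne : exists x, A x by exists c; split; [lra|done].
case: (completeness A Hb Hne) => m [Hub Hlub].
have Hcm : c <= m by apply: Hub; split; [lra|done].
have Hme : m <= e by apply: Hlub => t [[_ H] _].
case: (Hst m (conj Hcm Hme)) => δ [Hδ Hm].
have [t' [[Ht'1 Ht'2] Ht'3]] : exists t', A t' /\ m - δ < t'.
  apply: NNPP => Hn. have : m <= m - δ.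
    apply: Hlub => t At. apply: Rnot_lt_le => Hlt. apply: Hn. by exists t.
  lra.
have Ht'm : t' <= m by apply: Hub.
case: (Rle_lt_or_eq_dec _ _ Hme) => Hme'.
- exfalso. set u := Rmin e (m + δ / 2).
  have Hu : Q u. apply: (Hm t') => //; first lra.
    + split; rewrite /u. apply: Rmin_glb; lra. apply: Rmin_l.
    + have := Rmin_r e (m + δ/2). rewrite -/u. lra.
  have : u <= m. apply: Hub. split => //. split. have := Rmin_glb e (m + δ/2) m. rewrite /u.
   have := Rmin_l e (m+δ/2). have : m <= Rmin e (m + δ/2) by apply: Rmin_glb; lra. lra.
   apply: Rmin_l.
  have : m < u by rewrite /u; apply: Rmin_glb_lt; lra.
  lra.
- subst m. apply: (Hm t') => //; lra.
Qed.



Lemma abs_lt x a : -a < x < a -> Rabs x < a.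
Proof. move=> [H1 H2]. by apply: Rabs_def1. Qed.

Lemma first_hit {d} (g : R -> Vec d) a b L y :
  rect_path_len_le g a b L -> g a <> y -> g b = y ->
  exists m, a < m <= b /\ g m = y /\ forall e u, a <= u <= e -> e < m -> g u <> y.
Proof.
move=> Hr Ha Hb. have [Hab [Hcont _]] := Hr.
set E := fun s => a <= s <= b /\ forall u, a <= u <= s -> g u <> y.
have HbE : bound E by exists b => t [[_ H] _].
have HnE : exists x, E x.
  exists a; split; [lra|]. move=> u Hu. have -> : u = a by lra. done.
case: (completeness E HbE HnE) => m [Hub Hlub].
have Ham : a <= m. apply: Hub. split; [lra|]. move=> u Hu. have -> : u = a by lra. done.
have Hmb : m <= b by apply: Hlub => t [[_ H] _].
have Hbelow : forall e u, a <= u <= e -> e < m -> g u <> y.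
  move=> e u Hu Hem.
  have [s [[_ Hs] Hes]] : exists s, E s /\ e < s.
    apply: NNPP => Hn. have : m <= e.
      apply: Hlub => t Et. apply: Rnot_lt_le => Hlt. apply: Hn. by exists t.
    lra.
  apply: Hs. lra.
have Hgm : g m = y.
  apply: NNPP => Hne.
  have Hp := vdist_pos _ _ Hne.
  case: (Hcont m (conj Ham Hmb) _ Hp) => δ [Hδ Hc].
  have Hnear : forall u, a <= u <= b -> Rabs (u - m) < δ -> g u <> y.
    move=> u Hu Hum Hgu. have := Hc u Hu Hum. rewrite Hgu vdist_sym. lra.
  case: (Rle_lt_or_eq_dec _ _ Hmb) => Hmb'.
  + set u := Rmin b (m + δ / 2).
    have Hmu : m < u by rewrite /u; apply: Rmin_glb_lt; lra.
    have Hub2 : u <= b by apply: Rmin_l.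
    have Hu2 : u <= m + δ/2 by apply: Rmin_r.
    have : u <= m.
      apply: Hub. split; [lra|]. move=> v Hv.
      case: (Rlt_le_dec v (m - δ/2)) => Hvm.
      * apply: (Hbelow (m - δ/2)); lra.
      * apply: Hnear. lra. apply: abs_lt; lra.
    lra.
  + subst m. by apply: Hne.
exists m. split; [|split]; try done. split; last done.
case: (Rle_lt_or_eq_dec _ _ Ham) => // Heq. subst m. by case: Ha.
Qed.

Definition Qp {d} (g : R -> Vec d) (a : R) (x : Vec d) (H : Vec d -> R) (K eps tau : R) : Prop :=
  exists n t, part a tau t n /\ Rabs (H (g tau) - H x) <= K * poly_sum g t n + eps.

Lemma Qp_triv {d} (g : R -> Vec d) a x H K eps u : 0 <= K -> 0 <= eps -> a <= u -> Rabs (H (g u) - H x) <= eps -> Qp g a x H K eps u.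
Proof. move=> HK He Hau Hu. exists 1%nat, (triv a u). split; first exact: part_triv.
have := poly_sum_nonneg g (triv a u) 1. nra. Qed.

Lemma creep_step (d : nat) (g : R -> Vec d) (a b L : R) (x y : Vec d) (H : Vec d -> R)
  (P : Vec d -> Prop) (M : R) (Hr : rect_path_len_le g a b L) (Hga : g a = x) (Hgb : g b = y) (Hxy : x <> y)
  (Hin : forall s, a <= s <= b -> P (g s) \/ g s = x \/ g s = y)
  (HPx : forall z, P z -> z <> x)
  (Hc : forall s, a <= s <= b -> forall eps, 0 < eps -> exists delta, 0 < delta /\
          forall u, a <= u <= b -> Rabs (u - s) < delta -> Rabs (H (g u) - H (g s)) < eps)
  (Hfr : forall s, a <= s <= b -> P (g s) -> forall eta, 0 < eta -> exists delta, 0 < delta /\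
          forall z, P z -> vdist z (g s) < delta -> Rabs (H z - H (g s)) <= (M + eta) * vdist z (g s))
  (HM : 0 <= M) eta eps e : 0 < eta -> 0 < eps -> a <= e <= b ->
  (forall u, a <= u <= e -> g u <> y) -> Qp g a x H (M + eta) eps e.
Proof.
move=> Heta Heps He Hny.
have [Hab [Hcont _]] := Hr.
have HK : 0 <= M + eta by lra.
apply: (creep a e); first lra.
  apply: Qp_triv => //; try lra; rewrite Hga. rewrite Rminus_diag Rabs_R0. lra.
move=> s Hs.
have Hsb : a <= s <= b by lra.
case: (Hin s Hsb) => [HP|[Hx|Hy]]; last first.
- exfalso. by apply: (Hny s Hs).
- case: (Hc s Hsb eps Heps) => δ [Hδ Hδc]. exists δ. split => // t' _ _ _ u Hu Hu2.
  apply: Qp_triv => //; try lra. rewrite -Hx. apply: Rlt_le. apply: Hδc. lra.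
  apply: abs_lt; lra.
- have Hsx : g s <> x by apply: HPx.
  case: (Hfr s Hsb HP eta Heta) => δ1 [Hδ1 Hδ1c].
  have Hpos := vdist_pos _ _ Hsx.
  case: (Hcont s Hsb (Rmin δ1 (vdist (g s) x)) (Rmin_glb_lt _ _ _ Hδ1 Hpos)) => δ [Hδ Hδc].
  have Hnearx : forall u, a <= u <= e -> Rabs (u - s) < δ -> P (g u) /\ vdist (g u) (g s) < δ1.
    move=> u Hu Hus. have Hd := Hδc u (conj (proj1 Hu) (Rle_trans _ _ _ (proj2 Hu) (proj2 He))) Hus.
    have H1 := Rmin_l δ1 (vdist (g s) x). have H2 := Rmin_r δ1 (vdist (g s) x).
    split; last lra.
    case: (Hin u (conj (proj1 Hu) (Rle_trans _ _ _ (proj2 Hu) (proj2 He)))) => [//|[Hux|Huy]].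
    + exfalso. rewrite Hux vdist_sym in Hd. lra.
    + exfalso. exact: (Hny u Hu Huy).
  exists δ. split => // t' Hat' Ht' [n [t [Hp Hb]]] u Hu Hu2.
  have Ht'e : a <= t' <= e by lra.
  have [HPt' Hdt'] := Hnearx t' Ht'e ltac:(apply: abs_lt; lra).
  have [HPu Hdu] := Hnearx u ltac:(lra) ltac:(apply: abs_lt; lra).
  have B1 := Hδ1c _ HPt' Hdt'. have B2 := Hδ1c _ HPu Hdu.
  exists n.+2, (ext (ext t n s) n.+1 u). split.
    apply: (part_snoc _ s); last lra. apply: (part_snoc _ t') => //. lra.
  rewrite poly_sum_snoc poly_sum_snoc.
  rewrite /ext ltnn. case: Hp => [_ [Htn _]]. rewrite Htn.
  rewrite (vdist_sym (g s) (g t')).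
  have := Rabs_triang (H (g u) - H (g s)) ((H (g s) - H (g t')) + (H (g t') - H x)).
  have := Rabs_triang (H (g s) - H (g t')) (H (g t') - H x).
  have -> : H (g u) - H (g s) + (H (g s) - H (g t') + (H (g t') - H x)) = H (g u) - H x by ring.
  have : Rabs (H (g s) - H (g t')) <= (M + eta) * vdist (g t') (g s).
    by rewrite Rabs_minus_sym.
  lra.
Qed.


Lemma path_est (d : nat) (g : R -> Vec d) (a b L : R) (x y : Vec d) (H : Vec d -> R)
  (P : Vec d -> Prop) (M : R) (Hr : rect_path_len_le g a b L) (Hga : g a = x) (Hgb : g b = y) (Hxy : x <> y)
  (Hin : forall s, a <= s <= b -> P (g s) \/ g s = x \/ g s = y)
  (HPx : forall z, P z -> z <> x)
  (Hc : forall s, a <= s <= b -> forall eps, 0 < eps -> exists delta, 0 < delta /\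
          forall u, a <= u <= b -> Rabs (u - s) < delta -> Rabs (H (g u) - H (g s)) < eps)
  (Hfr : forall s, a <= s <= b -> P (g s) -> forall eta, 0 < eta -> exists delta, 0 < delta /\
          forall z, P z -> vdist z (g s) < delta -> Rabs (H z - H (g s)) <= (M + eta) * vdist z (g s))
  (HM : 0 <= M) : Rabs (H y - H x) <= M * L.
Proof.
have [Hab [Hcont _]] := Hr.
have HL := L_nonneg g a b L Hr.
case: (first_hit g a b L y Hr ltac:(by rewrite Hga) Hgb) => m [Hm [Hgm Hbel]].
apply: le_epsilon => eps Heps.
set eta := eps / (2 * (L + 1)).
have Heta : 0 < eta by rewrite /eta; apply: Rdiv_lt_0_compat; lra.
have HetaL : eta * L <= eps / 2.
  rewrite /eta. apply: (Rmult_le_reg_r (2 * (L+1))); first lra.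
  have -> : eps / (2 * (L + 1)) * L * (2 * (L + 1)) = eps * L by field; lra. nra.
have Hmab : a <= m <= b by lra.
case: (Hc m Hmab (eps/4) ltac:(lra)) => δ [Hδ Hδc].
set e := Rmax a (m - δ/2).
have He1 : a <= e by apply: Rmax_l.
have He2 : e < m by apply: Rmax_lub_lt; lra.
have He3 : m - δ/2 <= e by apply: Rmax_r.
have Hq := creep_step d g a b L x y H P M Hr Hga Hgb Hxy Hin HPx Hc Hfr HM eta (eps/4) e Heta ltac:(lra) ltac:(lra)
             (fun u Hu => Hbel e u Hu He2).
case: Hq => [n [t [Hp Hbd]]].
have Hpb := part_bound g a b L t n e Hr Hp ltac:(lra).
have Hd := Hδc e ltac:(lra) ltac:(apply: abs_lt; lra).
rewrite Hgm in Hd.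
have := Rabs_triang (H y - H (g e)) (H (g e) - H x).
have -> : H y - H (g e) + (H (g e) - H x) = H y - H x by ring.
rewrite Rabs_minus_sym in Hd.
have : (M + eta) * poly_sum g t n <= (M + eta) * L by apply: Rmult_le_compat_l; lra.
nra.
Qed.



Lemma div_bound q D c : 0 < D -> Rabs (q / D) < c -> Rabs q < c * D.
Proof. move=> HD H. have -> : q = (q / D) * D by field; lra.
rewrite Rabs_mult (Rabs_pos_eq D); last lra. nra. Qed.

Lemma div_le q D c : 0 < D -> Rabs q <= c * D -> Rabs (q / D) <= c.
Proof. move=> HD H. rewrite /Rdiv Rabs_mult (Rabs_pos_eq (/ D)); last first.
  apply: Rlt_le; exact: Rinv_0_lt_compat.
apply: (Rmult_le_reg_r D) => //. have -> : Rabs q * / D * D = Rabs q by field; lra. done. Qed.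

Lemma interior_sub {d} (K : Vec d -> Prop) z : interiorV K z -> K z.
Proof. move=> [r [Hr H]]. apply: H. rewrite vdist_refl. done. Qed.

Lemma deriv_cont {d} (K : Vec d -> Prop) F G : deriv_on K F G -> cont_on_R K F.
Proof.
move=> Hd x Kx eps Heps.
case: (Hd x Kx 1 Rlt_0_1) => δ1 [Hδ1 H1].
set c := 1 + vnorm (G x) + 1.
have Hc : 0 < c by have := vnorm_nonneg (G x); rewrite /c; lra.
exists (Rmin δ1 (eps / c)). split. apply: Rmin_glb_lt => //. apply: Rdiv_lt_0_compat; lra.
move=> y Ky Hy. case: (classic (y = x)) => [->|Hne].
  rewrite Rminus_diag Rabs_R0. done.
have Hp := vdist_pos _ _ Hne.
have Hq := div_bound _ _ _ Hp (H1 y Ky Hne (Rlt_le_trans _ _ _ Hy (Rmin_l _ _))).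
have Hcs := CS (G x) (vsub y x). rewrite -/(vdist y x) in Hcs.
have Hy2 : vdist y x < eps / c := Rlt_le_trans _ _ _ Hy (Rmin_r _ _).
have Hy3 : vdist y x * c < eps.
  have := Rmult_lt_compat_r c _ _ Hc Hy2. have -> : eps / c * c = eps by field; lra. done.
have := Rabs_triang (F y - F x - dot (G x) (vsub y x)) (dot (G x) (vsub y x)).
have -> : F y - F x - dot (G x) (vsub y x) + dot (G x) (vsub y x) = F y - F x by ring.
have := vnorm_nonneg (G x). rewrite /c in Hy3. nra.
Qed.

Lemma converse {d} (K : Vec d -> Prop) F G : C1_on K F G -> C1_int_with K F G F G.
Proof.
move=> [HcG HdF]. split; [|split; [|split]].
- split.
  + move=> x Hx eps Heps. case: (HcG x (interior_sub _ _ Hx) eps Heps) => δ [Hδ H].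
    exists δ. split => // y Hy. apply: H. exact: interior_sub.
  + move=> x Hx eps Heps. case: (HdF x (interior_sub _ _ Hx) eps Heps) => δ [Hδ H].
    exists δ. split => // y Hy. apply: H. exact: interior_sub.
- by move=> x _; split.
- exact: (deriv_cont _ _ _ HdF).
- exact: HcG.
Qed.



Lemma not_interior_boundary {d} (K : Vec d -> Prop) x : K x -> ~ interiorV K x -> boundaryV K x.
Proof. move=> Kx Hni. split.
- move=> r Hr. exists x. rewrite vdist_refl. done.
- move=> r Hr. apply: NNPP => Hn. apply: Hni. exists r. split => // y Hy.
  apply: NNPP => Ky. apply: Hn. by exists y.
Qed.

Lemma forward {d} (K : Vec d -> Prop)
  (Hpath : forall x, boundaryV K x ->
     exists C r, 0 < C /\ 0 < r /\
       forall y, K y -> vdist y x < r ->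
         exists (a b : R) (g : R -> Vec d),
           g a = x /\ g b = y /\
           rect_path_len_le g a b (C * vdist x y) /\
           (forall s, a <= s <= b -> interiorV K (g s) \/ g s = x \/ g s = y))
  f df F G : C1_int_with K f df F G -> C1_on K F G.
Proof.
move=> [[Hcdf Hdf] [Heq [HcF HcG]]]. split => //.
move=> x Kx eps Heps.
case: (classic (interiorV K x)) => Hix.
- case: (Hdf x Hix eps Heps) => δ1 [Hδ1 H1].
  have [r [Hr Hball]] := Hix.
  exists (Rmin δ1 (r/2)). split; first by apply: Rmin_glb_lt; lra.
  move=> y Ky Hne Hy.
  have Hy1 := Rlt_le_trans _ _ _ Hy (Rmin_l _ _).
  have Hy2 := Rlt_le_trans _ _ _ Hy (Rmin_r _ _).
  have Hiy : interiorV K y.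
    exists (r/2). split; first lra. move=> z Hz. apply: Hball.
    have := vdist_triangle z y x. lra.
  case: (Heq x Hix) => -> ->. case: (Heq y Hiy) => -> _.
  exact: H1.
- have Hb := not_interior_boundary K x Kx Hix.
  case: (Hpath x Hb) => C [r [HC [Hr Hp]]].
  set M := eps / (2 * C).
  have HM : 0 < M by rewrite /M; apply: Rdiv_lt_0_compat; lra.
  case: (HcG x Kx M HM) => δ2 [Hδ2 H2].
  exists (Rmin r (δ2 / C)). split; first by apply: Rmin_glb_lt => //; apply: Rdiv_lt_0_compat.
  move=> y Ky Hne Hy.
  have Hyr := Rlt_le_trans _ _ _ Hy (Rmin_l _ _).
  have Hyd := Rlt_le_trans _ _ _ Hy (Rmin_r _ _).
  have HL : C * vdist x y < δ2.
    rewrite vdist_sym. have := Rmult_lt_compat_l C _ _ HC Hyd.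
    have -> : C * (δ2 / C) = δ2 by field; lra. done.
  case: (Hp y Ky Hyr) => a [b [g [Hga [Hgb [Hrect Hin]]]]].
  have [Hab [Hgc _]] := Hrect.
  set v := G x.
  set H := fun z => F z - dot v z.
  have HK : forall s, a <= s <= b -> K (g s).
    move=> s Hs. case: (Hin s Hs) => [/interior_sub //|[->|->]] //.
  have Hpx : forall s, a <= s <= b -> vdist (g s) x < δ2.
    move=> s Hs. have := point_bound g a b _ s Hrect Hs. rewrite Hga. lra.
  have Hest := path_est d g a b (C * vdist x y) x y H (interiorV K) M Hrect Hga Hgb
    (fun E => Hne (esym E)) Hin.
  have Hest2 : Rabs (H y - H x) <= M * (C * vdist x y).
    apply: Hest.
    + move=> z Hz Ezx. apply: Hix. by rewrite -Ezx.
    + move=> s Hs eps' Heps'.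
      case: (HcF (g s) (HK s Hs) (eps'/2) ltac:(lra)) => δF [HδF HF].
      set c := vnorm v + 1.
      have Hc : 0 < c by have := vnorm_nonneg v; rewrite /c; lra.
      case: (Hgc s Hs (Rmin δF (eps' / (2 * c))) ltac:(apply: Rmin_glb_lt => //; apply: Rdiv_lt_0_compat; lra)) => δ [Hδ Hg].
      exists δ. split => // u Hu Hus.
      have Hd := Hg u Hu Hus.
      have Hd1 := Rlt_le_trans _ _ _ Hd (Rmin_l _ _).
      have Hd2 := Rlt_le_trans _ _ _ Hd (Rmin_r _ _).
      have HFu := HF (g u) (HK u Hu) Hd1.
      have Hcs := CS v (vsub (g u) (g s)). rewrite -/(vdist (g u) (g s)) dot_sub_r in Hcs.
      have Hd3 : vdist (g u) (g s) * c < eps' / 2.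
        have := Rmult_lt_compat_r c _ _ Hc Hd2. have -> : eps' / (2 * c) * c = eps' / 2 by field; lra. done.
      rewrite /H.
      have := Rabs_triang (F (g u) - F (g s)) (- (dot v (g u) - dot v (g s))).
      rewrite Rabs_Ropp.
      have -> : F (g u) - F (g s) + - (dot v (g u) - dot v (g s)) = F (g u) - dot v (g u) - (F (g s) - dot v (g s)) by ring.
      have := vdist_nonneg (g u) (g s). have := vnorm_nonneg v. rewrite /c in Hd3. nra.
    + move=> s Hs HPs eta Heta.
      set p := g s.
      case: (Hdf p HPs eta Heta) => δ [Hδ Hd].
      have HGp : vdist (G p) v < M. apply: H2; [exact: HK|exact: Hpx].
      exists δ. split => // z Hz Hzp.
      case: (classic (z = p)) => [->|Hzn].
        rewrite vdist_refl Rminus_diag Rabs_R0. lra.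
      have Hpos := vdist_pos _ _ Hzn.
      have Hq := div_bound _ _ _ Hpos (Hd z Hz Hzn Hzp).
      case: (Heq z Hz) => Ez _. case: (Heq p HPs) => Ep EGp.
      have Hcs := CS (vsub (G p) v) (vsub z p). rewrite -/(vdist z p) -/(vdist (G p) v) in Hcs.
      rewrite dot_sub_l !dot_sub_r in Hcs.
      rewrite /H Ez Ep.
      rewrite EGp in HGp Hcs.
      have := Rabs_triang (f z - f p - dot (df p) (vsub z p)) (dot (df p) z - dot (df p) p - (dot v z - dot v p)).
      rewrite dot_sub_r.
      have -> : f z - f p - (dot (df p) z - dot (df p) p) + (dot (df p) z - dot (df p) p - (dot v z - dot v p)) = f z - dot v z - (f p - dot v p) by ring.
      rewrite dot_sub_r in Hq.
      have := vdist_nonneg (df p) v. nra.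
    + lra.
  have Hpos := vdist_pos _ _ Hne.
  apply: (Rle_lt_trans _ (eps / 2)); last lra.
  apply: div_le => //.
  rewrite dot_sub_r. rewrite /H in Hest2.
  have -> : F y - F x - (dot (G x) y - dot (G x) x) = F y - dot v y - (F x - dot v x) by rewrite /v; ring.
  rewrite (vdist_sym x y) /M in Hest2.
  have -> : eps / 2 * vdist y x = eps / (2 * C) * (C * vdist y x) by field; lra.
  done.
Qed.

Theorem mainTheorem14 (d : nat) (K : Vec d -> Prop)
  (Hcpt : is_compact K) (Hreg : topologically_regular K)
  (Hpath : forall x, boundaryV K x ->
     exists C r, 0 < C /\ 0 < r /\
       forall y, K y -> vdist y x < r ->
         exists (a b : R) (g : R -> Vec d),
           g a = x /\ g b = y /\
           rect_path_len_le g a b (C * vdist x y) /\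
           (forall s, a <= s <= b -> interiorV K (g s) \/ g s = x \/ g s = y)) :
  (forall f df F G, C1_int_with K f df F G -> C1_on K F G) /\
  (forall F G, C1_on K F G -> C1_int_with K F G F G).
Proof.
split.
- move=> f df F G. exact: (forward K Hpath).
- move=> F G. exact: converse.
Qed.
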